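(* Consider the adoption–opinion model described in the context and suppose Assumption 1 (stated in the context) holds. If $s(0),a(0),d(0)\in[0,1]^n$ and $s(0)+a(0)+d(0)=\mathbf 1$, then $s(t),a(t),d(t)\in[0,1]^n$ and $s(t)+a(t)+d(t)=\mathbf 1$ for all $t\ge 0$. Moreover, if $x(0)\in[0,1]^n$, then $x(t)\in[0,1]^n$ for all $t\ge0$.
   Context: Let $n\ge1$ and $\mathcal V=\{1,\dots,n\}$ (communities). Let $W,\tilde W\in\mathbb R_+^{n\times n}$ be nonnegative matrices (physical and social interaction matrices). For each $i\in\mathcal V$ let $\beta_i,\gamma_i,\theta_i,\delta_i\in[0,1]$ and $\alpha_i,\lambda_i,\xi_i\ge0$ with $\alpha_i+\lambda_i+\xi_i=1$. The adoption–opinion model is the discrete-time system ($t\in\mathbb Z_+$), for all $i\in\mathcal V$: $s_i(t+1)=s_i(t)-\beta_i x_i(t)s_i(t)\sum_{j}W_{ij}a_j(t)+\gamma_i x_i(t)d_i(t)-\theta_i(1-x_i(t))s_i(t)$, $a_i(t+1)=a_i(t)+\beta_i x_i(t)s_i(t)\sum_{j}W_{ij}a_j(t)-\delta_i a_i(t)$, $d_i(t+1)=d_i(t)-\gamma_i x_i(t)d_i(t)+\theta_i(1-x_i(t))s_i(t)+\delta_i a_i(t)$, $x_i(t+1)=\alpha_i x_i(0)+\lambda_i\sum_j\tilde W_{ij}x_j(t)+\xi_i\sum_jW_{ij}a_j(t)$. Here $s_i,a_i,d_i$ are the fractions of susceptible, adopter and dissatisfied individuals in community $i$ and $x_i$ its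 opinion. Assumption 1: $W$ and $\tilde W$ are both row-stochastic and irreducible, and $\gamma_i+\theta_i\in(0,1)$ for all $i\in\mathcal V$. $\mathbf 1$ denotes the all-ones vector. *)

(* Defs.v *)
From mathcomp Require Import all_boot all_order all_algebra.
Set Implicit Arguments. Unset Strict Implicit. Unset Printing Implicit Defensive.
Import Order.TTheory GRing.Theory Num.Theory.
Local Open Scope ring_scope.

Definition nonneg_mx (R : numDomainType) n (W : 'M[R]_n) : Prop :=
  forall i j, 0 <= W i j.

Definition row_stochastic (R : numDomainType) n (W : 'M[R]_n) : Prop :=
  nonneg_mx W /\ forall i, \sum_j W i j = 1.

Definition irreducible_mx (R : numDomainType) n (W : 'M[R]_n) : Prop :=
  forall i j : 'I_n, connect (fun k l => 0 < W k l) i j.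

Definition in01 (R : numDomainType) (v : R) : Prop := 0 <= v <= 1.

Definition adoption_opinion_model (R : numDomainType) n
    (W Wt : 'M[R]_n) (beta gamma theta delta alpha lambda xi : 'I_n -> R)
    (s a d x : nat -> 'I_n -> R) : Prop :=
  forall (t : nat) (i : 'I_n),
    [/\ s t.+1 i = s t i - beta i * x t i * s t i * (\sum_j W i j * a t j)
                   + gamma i * x t i * d t i - theta i * (1 - x t i) * s t i,
        a t.+1 i = a t i + beta i * x t i * s t i * (\sum_j W i j * a t j)
                   - delta i * a t i,
        d t.+1 i = d t i - gamma i * x t i * d t i
                   + theta i * (1 - x t i) * s t i + delta i * a t i
      & x t.+1 i = alpha i * x 0%N i + lambda i * (\sum_j Wt i j * x t j)
                   + xi i * (\sum_j W i j * a t j)].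

(* Main.v *)
Require Import Defs.
From mathcomp Require Import all_boot all_order all_algebra.
From mathcomp Require Import ring lra.
Import Order.TTheory GRing.Theory Num.Theory.
Local Open Scope ring_scope.

Lemma avg01 (R : realFieldType) n (W : 'M[R]_n) (v : 'I_n -> R) i :
  row_stochastic W -> (forall j, 0 <= v j <= 1) ->
  0 <= \sum_j W i j * v j <= 1.
Proof.
move=> [W0 W1] hv; apply/andP; split.
  by apply: sumr_ge0 => j _; apply: mulr_ge0 => //; case/andP: (hv j).
rewrite -(W1 i); apply: ler_sum => j _.
case/andP: (hv j) => _ h1; rewrite -[leRHS]mulr1; exact: ler_wpM2l.
Qed.

Lemma step (R : realFieldType) (b g th de s a d x y : R) :
  0 <= b <= 1 -> 0 <= g <= 1 -> 0 <= th <= 1 -> 0 <= de <= 1 ->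
  0 <= s -> 0 <= a -> 0 <= d -> s + a + d = 1 -> 0 <= x <= 1 -> 0 <= y <= 1 ->
  [/\ 0 <= s - b * x * s * y + g * x * d - th * (1 - x) * s,
      0 <= a + b * x * s * y - de * a &
      0 <= d - g * x * d + th * (1 - x) * s + de * a].
Proof.
move=> /andP[b0 b1] /andP[g0 g1] /andP[t0 t1] /andP[e0 e1] s0 a0 d0 sad
  /andP[x0 x1] /andP[y0 y1].
have by1 : b * y <= 1 by rewrite -[1]mulr1; apply: ler_pM.
have bxy : b * x * y <= x.
  by rewrite -mulrA [x * y]mulrC mulrA -[leRHS]mul1r ler_wpM2r.
have tx : th * (1 - x) <= 1 - x by rewrite -[leRHS]mul1r ler_wpM2r // subr_ge0.
have gx : g * x <= 1 by rewrite -[1]mulr1; apply: ler_pM.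
have c1 : 0 <= 1 - b * x * y - th * (1 - x) by lra.
have p1 : 0 <= s * (1 - b * x * y - th * (1 - x)) by apply: mulr_ge0.
have p2 : 0 <= g * x * d by rewrite !mulr_ge0.
have p3 : 0 <= a * (1 - de) by rewrite mulr_ge0 // subr_ge0.
have p4 : 0 <= b * x * s * y by rewrite !mulr_ge0.
have p5 : 0 <= d * (1 - g * x) by rewrite mulr_ge0 // subr_ge0.
have p6 : 0 <= th * (1 - x) * s by rewrite !mulr_ge0 // subr_ge0.
have p7 : 0 <= de * a by rewrite mulr_ge0.
split.
- have -> : s - b * x * s * y + g * x * d - th * (1 - x) * s =
    s * (1 - b * x * y - th * (1 - x)) + g * x * d by ring.
  exact: addr_ge0.
- have -> : a + b * x * s * y - de * a = a * (1 - de) + b * x * s * y by ring.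
  exact: addr_ge0.
- have -> : d - g * x * d + th * (1 - x) * s + de * a =
    d * (1 - g * x) + th * (1 - x) * s + de * a by ring.
  by rewrite !addr_ge0.
Qed.

Theorem proposition1 (R : realFieldType) (n : nat) (W Wt : 'M[R]_n)
  (beta gamma theta delta alpha lambda xi : 'I_n -> R)
  (s a d x : nat -> 'I_n -> R) :
  (0 < n)%N ->
  nonneg_mx W -> nonneg_mx Wt ->
  (forall i, [/\ in01 (beta i), in01 (gamma i), in01 (theta i) & in01 (delta i)]) ->
  (forall i, [/\ 0 <= alpha i, 0 <= lambda i, 0 <= xi i
                & alpha i + lambda i + xi i = 1]) ->
  (* Assumption 1 *)
  row_stochastic W -> row_stochastic Wt -> irreducible_mx W -> irreducible_mx Wt ->
  (forall i, 0 < gamma i + theta i < 1) ->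
  adoption_opinion_model W Wt beta gamma theta delta alpha lambda xi s a d x ->
  (forall i, [/\ in01 (s 0%N i), in01 (a 0%N i), in01 (d 0%N i)
                & s 0%N i + a 0%N i + d 0%N i = 1]) ->
  (forall i, in01 (x 0%N i)) ->
  (forall t i, [/\ in01 (s t i), in01 (a t i), in01 (d t i)
                  & s t i + a t i + d t i = 1])
  /\
  (forall t i, in01 (x t i)).
Proof.
move=> _ _ _ hp hc HW HWt _ _ _ hm h0 hx0.
suff H : forall t, (forall i, [/\ in01 (s t i), in01 (a t i), in01 (d t i)
                  & s t i + a t i + d t i = 1]) /\ (forall i, in01 (x t i)).
  by split=> t i; case: (H t) => H1 H2; [exact: H1 | exact: H2].
elim=> [|t [IH1 IH2]]; first by split.
have ha : forall j, 0 <= a t j <= 1 by move=> j; case: (IH1 j).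
have hxx : forall j, 0 <= x t j <= 1 by move=> j; exact: IH2.
split=> i.
  case: (hm t i) => -> -> -> _.
  case: (hp i) => hb hg hth hde; case: (IH1 i) => /andP[s0 _] /andP[a0 _] /andP[d0 _] sad.
  case: (@step R _ _ _ _ _ _ _ _ _ hb hg hth hde s0 a0 d0 sad (IH2 i) (@avg01 R n W _ i HW ha)) => q1 q2 q3.
  rewrite /in01; split; last (by lra); apply/andP; split => //; lra.
case: (hm t i) => _ _ _ ->.
  case: (hc i) => al0 la0 xi0 sum1.
  have y1 := @avg01 R n W _ i HW ha; have y2 := @avg01 R n Wt _ i HWt hxx.
  have x0 := hx0 i; rewrite /in01 in x0.
  move: y1 y2 x0; set u := \sum_j _; set v := \sum_j _ => /andP[u0 u1] /andP[v0 v1] /andP[z0 z1].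
  rewrite /in01; apply/andP; split.
    by rewrite !addr_ge0 // mulr_ge0.
  have e1 : alpha i * x 0%N i <= alpha i by rewrite -[leRHS]mulr1 ler_wpM2l.
  have e2 : lambda i * v <= lambda i by rewrite -[leRHS]mulr1 ler_wpM2l.
  have e3 : xi i * u <= xi i by rewrite -[leRHS]mulr1 ler_wpM2l.
  lra.
Qed.
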